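(* Every Ehrhart fan is balanced: if $\Sigma$ is an Ehrhart fan of dimension $d$, then for every $\tau\in\Sigma(d-1)$, \[ \sum_{\sigma\in\Sigma(d),\ \tau\subseteq\sigma}u_{\sigma(1)\setminus\tau(1)}\in\mathrm{span}_\mathbb{R}(\tau), \] where $u_{\sigma(1)\setminus\tau(1)}$ denotes the primitive generator of the unique ray of $\sigma$ not in $\tau$.
   Context: $N$ is a free abelian group, $N_\mathbb{R}=N\otimes\mathbb{R}$, $M=\mathrm{Hom}(N,\mathbb{Z})$ viewed as integral linear functions. $\Sigma(k)$ denotes the set of $k$-dimensional cones of a fan $\Sigma$. A fan is unimodular if it contains the origin and for each cone the primitive ray generators $u_\rho\in N$ extend to a $\mathbb{Z}$-basis of $N$. $\mathrm{PL}(\Sigma)$: functions on $|\Sigma|$ agreeing on each cone with some element of $M$; $\underline{\mathrm{PL}}(\Sigma)$ its quotient by restrictions of elements of $M$. Courant function $\delta_\rho$: $1$ at $u_\rho$, $0$ at other ray generators. Star fan $\Sigma^\sigma$: image in $N_\mathbb{R}/\mathrm{span}(\sigma)$ (lattice $N/\mathrm{Span}_\mathbb{Z}(\sigma\cap N)$) of all cones that are faces of cones containing $\sigma$; $[f]^\sigma$ is the class of the function induced by $f-m$, $m\in M$ agreeing with $f$ on $\sigma$. A unimodular fan $\Sigma$ is Ehrhart (recursively on dimension) if (1) $\Sigma^\rho$ is Ehrhart for every ray $\rho$, and (2) there is $\chi_\Sigma:\underline{\mathrm{PL}}(\Sigma)\to\mathbb{Z}$ with $\chi_\Sigma(0)=1$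 and $\chi_\Sigma([f])=\chi_\Sigma([f-\delta_\rho])+\chi_{\Sigma^\rho}([f]^\rho)$ for all $f\in\mathrm{PL}(\Sigma)$, $\rho\in\Sigma(1)$. Zero-dimensional fans are Ehrhart with $\chi=1$. *)

(* Defs.v *)
(* A unimodular fan in N = Z^n is encoded by its finite set of
   cones, each cone being given by the finite set of primitive generators of its
   rays (a unimodular cone is simplicial, so this determines it). *)
From HB Require Import structures.
From mathcomp Require Import all_boot all_order all_algebra.
From mathcomp Require Import finmap.
From mathcomp Require Import reals.
Set Implicit Arguments. Unset Strict Implicit. Unset Printing Implicit Defensive.
Import Order.TTheory GRing.Theory Num.Theory.
Local Open Scope ring_scope.
Local Open Scope fset_scope.

Section Fans.
Variables (R : realType) (n : nat).

Local Notation vec := 'rV[int]_n.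
Local Notation cone := {fset vec}.
Local Notation fan := {fset {fset vec}}.

Definition toR (u : vec) : 'rV[R]_n := map_mx (fun z : int => z%:~R) u.

(* pairing of m in M = Hom(N,Z) (written in coordinates) with x in N_R *)
Definition pairZ (m : vec) (x : 'rV[R]_n) : R := \sum_i (m 0 i)%:~R * x 0 i.

Definition in_cone (C : cone) (x : 'rV[R]_n) : Prop :=
  exists a : vec -> R, (forall u, 0 <= a u) /\ x = \sum_(u <- C) a u *: toR u.

Definition in_span (C : cone) (x : 'rV[R]_n) : Prop :=
  exists a : vec -> R, x = \sum_(u <- C) a u *: toR u.

(* unimodular fan: contains the origin (empty cone), closed under faces,
   two cones meet in a common face, and the generators of every cone extend
   to a Z-basis of N (rows of a unimodular integer matrix) *)
Definition unimodular_fan (S : fan) : Prop :=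
  [/\ fset0 \in S,
      (forall C D : cone, C \in S -> D `<=` C -> D \in S),
      (forall C D : cone, C \in S -> D \in S ->
         forall x, in_cone C x -> in_cone D x -> in_cone (C `&` D) x) &
      (forall C : cone, C \in S -> exists B : 'M[int]_n,
         B \in unitmx /\ forall u, u \in C -> exists i, row i B = u)].

Definition fan_dim (S : fan) (d : nat) : Prop :=
  (exists2 C, C \in S & #|` C| = d) /\ (forall C, C \in S -> (#|` C| <= d)%N).

(* The star fan S^T (T \in S) lives in N_R / span(T) with
   lattice N / Span_Z(T).  We represent it through pull-backs to N_R:
   - its cones are the images of the cones C \in S with T `<=` C;
   - its rays are the images of the u \notin T with T `|` [fset u] \in S;
   - integral linear functions on N / Span_Z(T) are the m \in M vanishing on T;
   - a function on its support is pulled back to a function on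
     the union of the sets cone(C) + span(T), C \in S, T `<=` C. ----- *)

Definition star_support (S : fan) (T : cone) (x : 'rV[R]_n) : Prop :=
  exists C, [/\ C \in S, T `<=` C &
    exists y z, [/\ in_cone C y, in_span T z & x = (y + z)%R]].

Definition vanishes_on (m : vec) (T : cone) : Prop :=
  forall s, s \in T -> pairZ m (toR s) = 0.

Definition isPL (S : fan) (T : cone) (g : 'rV[R]_n -> R) : Prop :=
  forall C, C \in S -> T `<=` C ->
    exists m : vec, vanishes_on m T /\
      forall y z, in_cone C y -> in_span T z -> g (y + z)%R = pairZ m (y + z)%R.

(* equality in the quotient \underline{PL}(S^T) = PL(S^T) / M(S^T) *)
Definition PL_equiv (S : fan) (T : cone) (g g' : 'rV[R]_n -> R) : Prop :=
  exists m : vec, vanishes_on m T /\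
    forall x, star_support S T x -> g x - g' x = pairZ m x.

Definition is_ray (S : fan) (T : cone) (u : vec) : Prop :=
  u \notin T /\ T `|` [fset u] \in S.

Definition is_courant (S : fan) (T : cone) (u : vec) (delta : 'rV[R]_n -> R) :=
  [/\ isPL S T delta, delta (toR u) = 1 &
      forall v, is_ray S T v -> v != u -> delta (toR v) = 0].

(* h represents [g]^u : the class, in PL((S^T)^u) = PL(S^(T u {u})), of the
   function induced by g - m, where m is integral linear on N/Span_Z(T)
   agreeing with g on the ray u *)
Definition is_star_restriction (S : fan) (T : cone) (u : vec)
    (g h : 'rV[R]_n -> R) : Prop :=
  isPL S (T `|` [fset u]) h /\
  exists m : vec, [/\ vanishes_on m T, pairZ m (toR u) = g (toR u) &
    forall C, C \in S -> T `|` [fset u] `<=` C ->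
      forall x, in_cone C x -> h x = g x - pairZ m x].

Definition chi_axioms (S : fan) (T : cone)
    (chiT : ('rV[R]_n -> R) -> int) (chi_star : vec -> ('rV[R]_n -> R) -> int)
    : Prop :=
  [/\ (* chi_T is a function on \underline{PL}(S^T) *)
      (forall g g', isPL S T g -> isPL S T g' -> PL_equiv S T g g' ->
         chiT g = chiT g'),
      chiT (fun _ => 0) = 1 &
      forall g, isPL S T g -> forall u, is_ray S T u ->
        forall delta, is_courant S T u delta ->
        forall h, is_star_restriction S T u g h ->
          chiT g = (chiT (fun x => g x - delta x) + chi_star u h)%R].

(* Unfolding the recursive definition (the star fans of star
   fans of S are the S^T, T \in S, and chi of each is uniquely determined),
   S is Ehrhart iff there is a compatible family of functions chi_{S^T}. *)
Definition ehrhart (S : fan) : Prop :=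
  exists chi : cone -> ('rV[R]_n -> R) -> int,
    forall T, T \in S -> chi_axioms S T (chi T) (fun u => chi (T `|` [fset u])).

End Fans.

(* Main.v *)
Require Import Defs.
From HB Require Import structures.
From mathcomp Require Import all_boot all_order all_algebra.
From mathcomp Require Import finmap.
From mathcomp Require Import reals.
From mathcomp Require Import boolp zify lra.
Set Implicit Arguments. Unset Strict Implicit. Unset Printing Implicit Defensive.
Import Order.TTheory GRing.Theory Num.Theory.
Local Open Scope fset_scope.
Local Open Scope ring_scope.



Lemma pairZD (R : realType) n (m : 'rV[int]_n) (x y : 'rV[R]_n) :
  pairZ m (x + y) = pairZ m x + pairZ m y.
Proof. rewrite /pairZ -big_split; apply: eq_bigr => i _; rewrite mxE mulrDr. by []. Qed.

Lemma pairZZ (R : realType) n (m : 'rV[int]_n) (a : R) (x : 'rV[R]_n) :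
  pairZ m (a *: x) = a * pairZ m x.
Proof. rewrite /pairZ mulr_sumr; apply: eq_bigr => i _; rewrite mxE mulrCA. by []. Qed.

Lemma pairZ0 (R : realType) n (m : 'rV[int]_n) : pairZ m (0 : 'rV[R]_n) = 0.
Proof. by rewrite -(scale0r (0 : 'rV[R]_n)) pairZZ mul0r. Qed.

Lemma pairZ_sum (R : realType) n (m : 'rV[int]_n) (I : Type) (s : seq I) (F : I -> 'rV[R]_n) :
  pairZ m (\sum_(i <- s) F i) = \sum_(i <- s) pairZ m (F i).
Proof. by apply: big_morph; [exact: pairZD | exact: pairZ0]. Qed.

Lemma pairZ_m0 (R : realType) n (x : 'rV[R]_n) : pairZ 0 x = 0.
Proof. by rewrite /pairZ big1 // => i _; rewrite mxE mul0r. Qed.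

Lemma pairZ_lin (R : realType) n (m1 m2 : 'rV[int]_n) (k : int) (x : 'rV[R]_n) :
  pairZ (m1 - k *: m2) x = pairZ m1 x - k%:~R * pairZ m2 x.
Proof.
rewrite /pairZ mulr_sumr -sumrB; apply: eq_bigr => i _.
by rewrite !mxE intrB intrM mulrBl mulrA.
Qed.

Lemma toRD (R : realType) n (u v : 'rV[int]_n) : toR R (u + v) = toR R u + toR R v.
Proof. by apply/matrixP => i j; rewrite !mxE intrD. Qed.

Lemma toR0 (R : realType) n : toR R (0 : 'rV[int]_n) = 0.
Proof. by apply/matrixP => i j; rewrite !mxE. Qed.

Lemma toR_sum (R : realType) n (I : Type) (s : seq I) (F : I -> 'rV[int]_n) :
  toR R (\sum_(i <- s) F i) = \sum_(i <- s) toR R (F i).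
Proof. by apply: big_morph; [exact: toRD | exact: toR0]. Qed.

Definition intZ n (m u : 'rV[int]_n) : int := \sum_i m 0 i * u 0 i.

Lemma pairZ_toR (R : realType) n (m u : 'rV[int]_n) :
  pairZ m (toR R u) = (intZ m u)%:~R.
Proof. by rewrite /pairZ /intZ rmorph_sum; apply: eq_bigr => i _; rewrite mxE rmorphM. Qed.

Lemma span0 (R : realType) n (C : {fset 'rV[int]_n}) : in_span C (0 : 'rV[R]_n).
Proof. by exists (fun _ => 0); rewrite big1 // => u _; rewrite scale0r. Qed.

Lemma spanD (R : realType) n (C : {fset 'rV[int]_n}) (x y : 'rV[R]_n) :
  in_span C x -> in_span C y -> in_span C (x + y).
Proof.
move=> [a ->] [b ->]; exists (fun u => a u + b u).
by rewrite -big_split; apply: eq_bigr => u _; rewrite scalerDl.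
Qed.

Lemma spanZ (R : realType) n (C : {fset 'rV[int]_n}) (c : R) (x : 'rV[R]_n) :
  in_span C x -> in_span C (c *: x).
Proof.
move=> [a ->]; exists (fun u => c * a u).
by rewrite scaler_sumr; apply: eq_bigr => u _; rewrite scalerA.
Qed.

Lemma spanB (R : realType) n (C : {fset 'rV[int]_n}) (x y : 'rV[R]_n) :
  in_span C x -> in_span C y -> in_span C (x - y).
Proof. by move=> hx hy; apply: spanD => //; rewrite -scaleN1r; apply: spanZ. Qed.

Lemma cone_span (R : realType) n (C : {fset 'rV[int]_n}) (x : 'rV[R]_n) :
  in_cone C x -> in_span C x.
Proof. by move=> [a [_ ->]]; exists a. Qed.

Lemma pairZ_span (R : realType) n (C : {fset 'rV[int]_n}) (m : 'rV[int]_n) (x : 'rV[R]_n) :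
  vanishes_on R m C -> in_span C x -> pairZ m x = 0.
Proof.
move=> hm [a ->]; rewrite pairZ_sum big_seq big1 // => u uC.
by rewrite pairZZ hm // mulr0.
Qed.

Definition dual n (B : 'M[int]_n) (i : 'I_n) : 'rV[int]_n := \row_k invmx B k i.

Lemma dual_int n (B : 'M[int]_n) (i : 'I_n) (x : 'rV[int]_n) :
  intZ (dual B i) x = (x *m invmx B) 0 i.
Proof. by rewrite /intZ mxE; apply: eq_bigr => k _; rewrite mxE mulrC. Qed.

Lemma dual_row (R : realType) n (B : 'M[int]_n) (i j : 'I_n) : B \in unitmx ->
  pairZ (dual B i) (toR R (row j B)) = (j == i)%:R.
Proof.
move=> Bu; rewrite pairZ_toR dual_int.
have -> : row j B *m invmx B = row j (B *m invmx B) by rewrite row_mul.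
by rewrite mulmxV // !mxE; case: (j == i).
Qed.

Lemma dual_exists (R : realType) n (S : {fset {fset 'rV[int]_n}}) (C : {fset 'rV[int]_n}) u :
  unimodular_fan R S -> C \in S -> u \in C ->
  exists m, pairZ m (toR R u) = 1 /\
    forall t, t \in C -> t != u -> pairZ m (toR R t) = 0.
Proof.
move=> [_ _ _ hU] CS uC; have [B [Bu hB]] := hU C CS.
have [i ri] := hB u uC; exists (dual B i); split.
  by rewrite -ri dual_row // eqxx.
move=> t tC tu; have [j rj] := hB t tC; rewrite -rj dual_row //.
case: eqP => // ji; move: tu; by rewrite -rj -ri ji eqxx.
Qed.



Definition setting (R : realType) n (S : {fset {fset 'rV[int]_n}}) d (tau : {fset 'rV[int]_n}) :=
  [/\ unimodular_fan R S, fan_dim S d, tau \in S & (#|` tau|).+1 = d].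


Lemma star_cones (R : realType) n (S : {fset {fset 'rV[int]_n}}) d tau C :
  setting R S d tau -> C \in S -> tau `<=` C ->
  C = tau \/ exists v, is_ray S tau v /\ C = tau `|` [fset v].
Proof.
move=> [hU [_ hd] tS hc] CS tC.
have hCd := hd C CS.
have sz := cardfsDS tC.
have [E|E] := eqVneq (C `\` tau) fset0.
  left; apply/eqP; rewrite eqEfsubset tC andbT -fsetD_eq0; exact/eqP.
right.
have h : (0 < #|` C `\` tau|)%N by rewrite cardfs_gt0 E.
have /cardfs1P [v Hv] : #|` C `\` tau| == 1%N.
  by apply/eqP; move: h; rewrite sz; lia.
have vin : v \in C `\` tau by rewrite Hv in_fset1.
move: vin; rewrite in_fsetD => /andP [vt vC].
have eqC : C = tau `|` [fset v].
  apply/fsetP => x; rewrite in_fsetU in_fset1.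
  have := congr1 (fun A => x \in A) Hv; rewrite /= in_fsetD in_fset1.
  case xt: (x \in tau) => /=; first by rewrite (fsubsetP tC).
  by [].
exists v; split; last exact: eqC.
by split => //; rewrite -eqC.
Qed.

Lemma ray_card (R : realType) n (S : {fset {fset 'rV[int]_n}}) d tau v :
  setting R S d tau -> is_ray S tau v -> #|` tau `|` [fset v]| = d.
Proof. by move=> [_ _ _ hc] [vt _]; rewrite fsetUC cardfsU1 vt add1n. Qed.

Lemma top_cone (R : realType) n (S : {fset {fset 'rV[int]_n}}) d tau v C :
  setting R S d tau -> is_ray S tau v -> C \in S -> tau `|` [fset v] `<=` C ->
  C = tau `|` [fset v].
Proof.
move=> hs rv CS sub; apply/esym/eqP; rewrite eqEfcard sub (ray_card hs rv).
by case: hs => _ [_ hd] _ _; rewrite hd.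
Qed.

Lemma ray_decomp (R : realType) n (S : {fset {fset 'rV[int]_n}}) tau v (y : 'rV[R]_n) :
  is_ray S tau v -> in_cone (tau `|` [fset v]) y ->
  exists a, 0 <= a /\ exists z, in_span tau z /\ y = a *: toR R v + z.
Proof.
move=> [vt _] [a [a0 ->]]; exists (a v); split => //.
exists (\sum_(u <- tau) a u *: toR R u); split; first by exists a.
by rewrite fsetUC big_fsetU1.
Qed.

Lemma ray_dual (R : realType) n (S : {fset {fset 'rV[int]_n}}) d tau v :
  setting R S d tau -> is_ray S tau v ->
  exists m, vanishes_on R m tau /\ pairZ m (toR R v) = 1.
Proof.
move=> [hU _ _ _] [vt vS].
have vin : v \in tau `|` [fset v] by rewrite in_fsetU in_fset1 eqxx orbT.
have [m [h1 h0]] := dual_exists hU vS vin.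
exists m; split => // t tt; apply: h0; first by rewrite in_fsetU tt.
by apply/eqP => tv; move: vt; rewrite -tv tt.
Qed.

Lemma ray_uniq (R : realType) n (S : {fset {fset 'rV[int]_n}}) d tau v (a a' : R) z z' :
  setting R S d tau -> is_ray S tau v -> in_span tau z -> in_span tau z' ->
  a *: toR R v + z = a' *: toR R v + z' -> a = a'.
Proof.
move=> hs rv hz hz'; have [m [hm h1]] := ray_dual hs rv.
move/(congr1 (pairZ m)); rewrite !pairZD !pairZZ h1 !(pairZ_span hm) //.
by rewrite !mulr1 !addr0.
Qed.



Lemma norm_aux (R : realType) (c e : R) : 0 <= c + (`|c| + `|e|).
Proof.
have h1 : - c <= `|c| by rewrite ler_normr lexx orbT.
have h2 : 0 <= `|e| := normr_ge0 e.
lra.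
Qed.

Lemma ray_sep (R : realType) n (S : {fset {fset 'rV[int]_n}}) d tau v w (a b : R) z z' :
  setting R S d tau -> is_ray S tau v -> is_ray S tau w -> v != w -> 0 < a -> 0 < b ->
  in_span tau z -> in_span tau z' ->
  a *: toR R w + z = b *: toR R v + z' -> False.
Proof.
move=> hs rv rw vw a0 b0 [c ->] [e ->] E.
pose K := fun t => `|c t| + `|e t|.
pose p := a *: toR R w + \sum_(t <- tau) (c t + K t) *: toR R t.
have sumK : forall f : 'rV[int]_n -> R,
    \sum_(t <- tau) (f t + K t) *: toR R t =
    \sum_(t <- tau) f t *: toR R t + \sum_(t <- tau) K t *: toR R t.
  by move=> f; rewrite -big_split; apply: eq_bigr => t _; rewrite scalerDl.
have pw : in_cone (tau `|` [fset w]) p.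
  exists (fun t => if t == w then a else c t + K t); split.
    by move=> t; case: eqP => _; [exact: ltW | exact: norm_aux].
  rewrite fsetUC big_fsetU1 ?eqxx; last by case: rw.
  congr (_ + _); rewrite big_seq [RHS]big_seq; apply: eq_bigr => t tt.
  case: eqP => // tw; case: rw; by rewrite -tw tt.
have pv : in_cone (tau `|` [fset v]) p.
  exists (fun t => if t == v then b else e t + K t); split.
    by move=> t; case: eqP => _; [exact: ltW | have := norm_aux (e t) (c t); rewrite /K; lra].
  rewrite fsetUC big_fsetU1 ?eqxx; last by case: rv.
  rewrite /p sumK addrA E -addrA -sumK.
  congr (_ + _); rewrite big_seq [RHS]big_seq; apply: eq_bigr => t tt.
  case: eqP => // tv; case: rv; by rewrite -tv tt.
case: (hs) => [[_ _ hI _] _ _ _].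
have := hI _ _ (proj2 rw) (proj2 rv) p pw pv.
have -> : (tau `|` [fset w]) `&` (tau `|` [fset v]) = tau.
  apply/fsetP => x; rewrite in_fsetI !in_fsetU !in_fset1.
  case: (x \in tau) => //=; case: eqP => // ->.
  by rewrite eq_sym (negbTE vw).
move=> /cone_span hp.
have sp : in_span tau (\sum_(t <- tau) (c t + K t) *: toR R t).
  by exists (fun t => c t + K t).
have := ray_uniq (a := a) (a' := 0) hs rw sp hp.
rewrite scale0r add0r => /(_ erefl) a00.
by move: a0; rewrite a00 ltxx.
Qed.

Definition delta (R : realType) n (tau : {fset 'rV[int]_n}) (w : 'rV[int]_n) (x : 'rV[R]_n) : R :=
  match pselect (exists a : R, 0 <= a /\ exists z, in_span tau z /\ x = a *: toR R w + z) with
  | left H => sval (cid H)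
  | right _ => 0
  end.

Lemma delta_gen (R : realType) n (S : {fset {fset 'rV[int]_n}}) d tau w v (a : R) z :
  setting R S d tau -> is_ray S tau w -> is_ray S tau v -> 0 <= a -> in_span tau z ->
  delta tau w (a *: toR R v + z) = if v == w then a else 0.
Proof.
move=> hs rw rv a0 hz; rewrite /delta; case: pselect => [H|H].
  case: (cid H) => a' /= [a'0 [z' [hz' E]]].
  case: eqP => [vw|/eqP vw].
    by subst v; apply: esym; exact: (ray_uniq hs rw hz hz' E).
  have [->|a'n0] := eqVneq a' 0 => //; exfalso.
  have a'p : 0 < a' by rewrite lt0r a'n0.
  have [a00|an0] := eqVneq a 0.
    move: E; rewrite a00 scale0r add0r => E.
    have := ray_uniq (a := 0) (a' := a') hs rw hz hz'.
    by rewrite scale0r add0r => /(_ E) a'00; move: a'n0; rewrite -a'00 eqxx.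
  have ap : 0 < a by rewrite lt0r an0.
  exact: (ray_sep hs rv rw vw a'p ap hz' hz (esym E)).
case: eqP => // vw; subst v; exfalso; apply: H.
by exists a; split => //; exists z.
Qed.

Lemma delta_span (R : realType) n (S : {fset {fset 'rV[int]_n}}) d tau w (z : 'rV[R]_n) :
  setting R S d tau -> is_ray S tau w -> in_span tau z -> delta tau w z = 0.
Proof.
move=> hs rw hz.
have := delta_gen hs rw rw (lexx 0) hz.
by rewrite scale0r add0r eqxx.
Qed.



Lemma PL_lin (R : realType) n (S : {fset {fset 'rV[int]_n}}) T (g f : 'rV[R]_n -> R) (k : int) :
  isPL S T g -> isPL S T f -> isPL S T (fun x => g x - k%:~R * f x).
Proof.
move=> hg hf C CS TC.
have [m1 [h1 e1]] := hg C CS TC; have [m2 [h2 e2]] := hf C CS TC.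
exists (m1 - k *: m2); split.
  by move=> s sT; rewrite pairZ_lin h1 // h2 // mulr0 subr0.
by move=> y z yc zs; rewrite e1 // e2 // pairZ_lin.
Qed.

Lemma PL_zero (R : realType) n (S : {fset {fset 'rV[int]_n}}) T :
  isPL S T (fun _ : 'rV[R]_n => 0).
Proof.
move=> C _ _; exists 0; split; first by move=> s _; rewrite pairZ_m0.
by move=> y z _ _; rewrite pairZ_m0.
Qed.

Lemma delta_PL (R : realType) n (S : {fset {fset 'rV[int]_n}}) d tau w :
  setting R S d tau -> is_ray S tau w -> isPL S tau (@delta R n tau w).
Proof.
move=> hs rw C CS tC.
case: (star_cones hs CS tC) => [->|[v [rv ->]]].
  exists 0; split; first by move=> s _; rewrite pairZ_m0.
  move=> y z yc zs; rewrite pairZ_m0 (delta_span hs rw) //.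
  by apply: spanD => //; exact: cone_span.
have [vw|vw] := eqVneq v w.
  subst v; have [m [hm h1]] := ray_dual hs rw.
  exists m; split => // y z yc zs.
  have [a [a0 [z0 [z0s ->]]]] := ray_decomp rw yc.
  have zz : in_span tau (z0 + z) by apply: spanD.
  rewrite -addrA (delta_gen hs rw rw a0 zz) eqxx pairZD pairZZ h1 (pairZ_span hm zz).
  by rewrite mulr1 addr0.
exists 0; split; first by move=> s _; rewrite pairZ_m0.
move=> y z yc zs; rewrite pairZ_m0.
have [a [a0 [z0 [z0s ->]]]] := ray_decomp rv yc.
have zz : in_span tau (z0 + z) by apply: spanD.
by rewrite -addrA (delta_gen hs rw rv a0 zz) (negbTE vw).
Qed.

Lemma delta_courant (R : realType) n (S : {fset {fset 'rV[int]_n}}) d tau w :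
  setting R S d tau -> is_ray S tau w -> is_courant S tau w (@delta R n tau w).
Proof.
move=> hs rw; split; first exact: (delta_PL hs rw).
  have := delta_gen hs rw rw (@ler01 R) (span0 R tau).
  by rewrite scale1r addr0 eqxx.
move=> v rv vw.
have := delta_gen hs rw rv (@ler01 R) (span0 R tau).
by rewrite scale1r addr0 (negbTE vw).
Qed.

Lemma star_zero (R : realType) n (S : {fset {fset 'rV[int]_n}}) d tau u (g : 'rV[R]_n -> R) :
  setting R S d tau -> isPL S tau g -> is_ray S tau u ->
  is_star_restriction S tau u g (fun _ => 0).
Proof.
move=> hs hg ru; split; first exact: PL_zero.
have [m [hm eg]] := hg (tau `|` [fset u]) (proj2 ru) (fsubsetUl _ _).
exists m; split => //.
  have uc : in_cone (tau `|` [fset u]) (toR R u).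
    exists (fun t => if t == u then 1 else 0); split.
      by move=> t; case: eqP.
    rewrite fsetUC big_fsetU1 ?eqxx ?scale1r; last by case: ru.
    rewrite big_seq big1 => [|t tt]; first by rewrite /= addr0.
    case: eqP => [tu|]; last by rewrite scale0r.
    by case: ru; rewrite -tu tt.
  by have := eg _ 0 uc (span0 R tau); rewrite addr0 => ->.
move=> C CS sub x; rewrite (top_cone hs ru CS sub) => xc.
by have := eg x 0 xc (span0 R tau); rewrite addr0 => ->; rewrite subrr.
Qed.



Definition chi_ok (R : realType) n (S : {fset {fset 'rV[int]_n}})
   (chi : {fset 'rV[int]_n} -> ('rV[R]_n -> R) -> int) :=
  forall T, T \in S -> chi_axioms S T (chi T) (fun u => chi (T `|` [fset u])).

Lemma step_b (R : realType) n (S : {fset {fset 'rV[int]_n}}) d tau chi g u :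
  setting R S d tau -> chi_ok S chi -> isPL S tau g -> is_ray S tau u ->
  chi tau g = chi tau (fun x => g x - @delta R n tau u x) + 1.
Proof.
move=> hs hchi hg ru.
have tS : tau \in S by case: hs.
have [_ _ h3] := hchi tau tS.
rewrite (h3 g hg u ru _ (delta_courant hs ru) _ (star_zero hs hg ru)).
by have [_ -> _] := hchi _ (proj2 ru).
Qed.

Lemma step_k (R : realType) n (S : {fset {fset 'rV[int]_n}}) d tau chi g u :
  setting R S d tau -> chi_ok S chi -> isPL S tau g -> is_ray S tau u ->
  forall k : int, chi tau (fun x => g x - k%:~R * @delta R n tau u x) = chi tau g - k.
Proof.
move=> hs hchi hg ru.
pose e := fun k : int => (fun x => g x - k%:~R * @delta R n tau u x).
have PLe : forall k, isPL S tau (e k).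
  by move=> k; apply: PL_lin => //; exact: (delta_PL hs ru).
have E : forall k, chi tau (e k) = chi tau (e (k + 1)) + 1.
  move=> k; rewrite (step_b hs hchi (PLe k) ru); congr (chi tau _ + 1).
  by apply: funext => x; rewrite /e intrD mulrDl mul1r opprD addrA.
have e0 : e 0 = g by apply: funext => x; rewrite /e mul0r subr0.
move=> k; change (chi tau (e k) = chi tau g - k).
elim/int_rec: k.
- by rewrite e0 subr0.
- move=> m IH; have := E m; rewrite IH.
  rewrite (_ : (m.+1 : int) = m%:Z + 1); last by lia.
  lia.
- move=> m IH; have := E (- (m.+1)%:Z).
  rewrite (_ : - (m.+1)%:Z + 1 = - m%:Z); last by lia.
  rewrite IH; lia.
Qed.

Lemma iter_lemma (R : realType) n (S : {fset {fset 'rV[int]_n}}) d tau chi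
    (kk : 'rV[int]_n -> int) (s : seq 'rV[int]_n) :
  setting R S d tau -> chi_ok S chi -> (forall w, w \in s -> is_ray S tau w) ->
  forall g, isPL S tau g ->
  isPL S tau (fun x => g x - \sum_(w <- s) (kk w)%:~R * @delta R n tau w x) /\
  chi tau g = chi tau (fun x => g x - \sum_(w <- s) (kk w)%:~R * @delta R n tau w x)
              + \sum_(w <- s) kk w.
Proof.
move=> hs hchi; elim: s => [|w s IH] hr g hg.
  have -> : (fun x => g x - \sum_(w <- [::]) (kk w)%:~R * @delta R n tau w x) = g.
    by apply: funext => x; rewrite big_nil subr0.
  by rewrite big_nil addr0.
have rw : is_ray S tau w by apply: hr; rewrite mem_head.
pose g' := fun x => g x - (kk w)%:~R * @delta R n tau w x.
have hg' : isPL S tau g' by apply: PL_lin => //; exact: (delta_PL hs rw).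
have hr' : forall w', w' \in s -> is_ray S tau w'.
  by move=> w' ww'; apply: hr; rewrite in_cons ww' orbT.
have [h1 h2] := IH hr' g' hg'.
have -> : (fun x => g x - \sum_(w0 <- w :: s) (kk w0)%:~R * @delta R n tau w0 x) =
          (fun x => g' x - \sum_(w0 <- s) (kk w0)%:~R * @delta R n tau w0 x).
  by apply: funext => x; rewrite big_cons /g' opprD addrA.
split => //; rewrite big_cons.
have := step_k hs hchi hg rw (kk w); rewrite -/g' h2 => H; by rewrite addrCA H addrC subrK.
Qed.



Lemma span_of_dual (R : realType) n (S : {fset {fset 'rV[int]_n}}) tau (x : 'rV[int]_n) :
  unimodular_fan R S -> tau \in S ->
  (forall m, vanishes_on R m tau -> pairZ m (toR R x) = 0) ->
  in_span tau (toR R x).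
Proof.
move=> [_ _ _ hU] tS hx; have [B [Bu hB]] := hU tau tS.
pose c := x *m invmx B.
have c0 : forall i, row i B \notin tau -> c 0 i = 0.
  move=> i ni.
  have van : vanishes_on R (dual B i) tau.
    move=> t tt; have [j rj] := hB t tt; rewrite -rj dual_row //.
    case: eqP => // ji; subst j; by rewrite rj tt in ni.
  have := hx _ van; rewrite pairZ_toR dual_int -/c => /eqP.
  by rewrite intr_eq0 => /eqP.
exists (fun u => \sum_(i | row i B == u) ((c 0 i)%:~R : R)).
transitivity (\sum_i (c 0 i)%:~R *: toR R (row i B)).
  have xE : x = c *m B by rewrite /c mulmxKV.
  apply/matrixP => a k; rewrite (ord1 a) {1}xE !mxE summxE rmorph_sum.
  by apply: eq_bigr => i _; rewrite !mxE rmorphM.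
rewrite (eq_bigr (fun u => \sum_i (if row i B == u then (c 0 i)%:~R *: toR R (row i B) else 0))); last first.
  move=> u _; rewrite scaler_suml big_mkcond /=; apply: eq_bigr => i _.
  by case: eqP => [->|]; rewrite ?scale0r.
rewrite exchange_big /=; apply: eq_bigr => i _.
case: (boolP (row i B \in tau)) => hi.
  rewrite (bigD1_seq (row i B)) ?fset_uniq //= eqxx big1 ?addr0 // => u.
  by move=> /negbTE; rewrite eq_sym => ->.
rewrite c0 // scale0r big_seq big1 // => u ut.
by case: eqP => // e; move: hi; rewrite e ut.
Qed.

Local Open Scope fset_scope.
Theorem corollary3 (R : realType) (n : nat) (Sigma : {fset {fset 'rV[int]_n}})
    (d : nat) :
  unimodular_fan R Sigma -> ehrhart R Sigma -> fan_dim Sigma d ->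
  forall tau : {fset 'rV[int]_n}, tau \in Sigma -> (#|` tau|).+1 = d ->
  @in_span R n tau
    (@toR R n (\sum_(sigma <- Sigma | (#|` sigma| == d) && (tau `<=` sigma))
              \sum_(u <- sigma `\` tau) u)).
Proof.
move=> hU [chi hchi] hd tau tS hc.
have hs : setting R Sigma d tau by split.
pose Fs : seq {fset 'rV[int]_n} := [seq s <- Sigma | (#|` s| == d) && (tau `<=` s)].
pose e := fun s : {fset 'rV[int]_n} => (head 0%R (s `\` tau : seq _) : 'rV[int]_n).
pose U : seq 'rV[int]_n := map e Fs.
have Dv : forall v, v \notin tau -> (tau `|` [fset v]) `\` tau = [fset v].
  move=> v vt; apply/fsetP => x; rewrite in_fsetD in_fsetU !in_fset1.
  case: eqP => [->|_]; first by rewrite vt orbT.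
  by rewrite orbF andNb.
have e_val : forall v, is_ray Sigma tau v -> e (tau `|` [fset v]) = v.
  by move=> v [vt _]; rewrite /e Dv // -fset_seq1.
have FsP : forall s : {fset 'rV[int]_n}, s \in Fs -> exists v, is_ray Sigma tau v /\ s = tau `|` [fset v].
  move=> s; rewrite mem_filter => /andP [/andP [/eqP sd ts] sS].
  case: (star_cones hs sS ts) => [st|h]; last exact: h.
  by exfalso; move: sd; rewrite st -hc; lia.
have inner : forall s : {fset 'rV[int]_n}, s \in Fs -> \sum_(u <- s `\` tau) u = e s.
  move=> s /FsP [v [rv ->]]; rewrite e_val // Dv ?big_seq_fset1 //; by case: rv.
have target : \sum_(sigma <- Sigma | (#|` sigma| == d) && (tau `<=` sigma))
                 \sum_(u <- sigma `\` tau) u = \sum_(w <- U) w.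
  rewrite -big_filter big_map -/Fs big_seq [RHS]big_seq; apply: eq_bigr => s sF.
  exact: inner.
have Ur : forall w : 'rV[int]_n, w \in U -> is_ray Sigma tau w.
  by move=> w /mapP [s sF ->]; have [v [rv ->]] := FsP s sF; rewrite e_val.
have Uu : uniq U.
  rewrite map_inj_in_uniq ?filter_uniq ?fset_uniq //.
  by move=> s1 s2 /FsP [v1 [r1 ->]] /FsP [v2 [r2 ->]]; rewrite !e_val // => ->.
have Um : forall v, is_ray Sigma tau v -> v \in U.
  move=> v rv; apply/mapP; exists (tau `|` [fset v]); last by rewrite e_val.
  by rewrite mem_filter (ray_card hs rv) eqxx fsubsetUl (proj2 rv).
have key : forall m0, vanishes_on R m0 tau -> pairZ m0 (toR R (\sum_(w <- U) w)) = 0%R.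
  move=> m0 hm0.
  have [hresp h0 _] := hchi tau tS.
  pose g0 := fun x : 'rV[R]_n => pairZ m0 x.
  have hg0 : isPL Sigma tau g0 by move=> C _ _; exists m0.
  have c1 : chi tau g0 = 1%R.
    rewrite -h0; apply: hresp => //; first exact: PL_zero.
    by exists m0; split => // x _; rewrite GRing.subr0.
  have [hG cG] := @iter_lemma R n Sigma d tau chi (fun w => intZ m0 w) U hs hchi Ur g0 hg0.
  have cG1 : chi tau (fun x => (g0 x - \sum_(w <- U) (intZ m0 w)%:~R * delta tau w x)%R) = 1%R.
    rewrite -h0; apply: hresp => //; first exact: PL_zero.
    exists 0%R; split; first by move=> s _; rewrite pairZ_m0.
    move=> x [C [CS tC [y [z [yc zs ->]]]]]; rewrite pairZ_m0 GRing.subr0 /g0.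
    case: (star_cones hs CS tC) => [Ct|[v [rv Cv]]].
      rewrite Ct in yc.
      have yz : in_span tau (y + z)%R by apply: spanD => //; exact: cone_span.
      rewrite (pairZ_span hm0 yz) big_seq big1 ?GRing.subrr // => w wU.
      by rewrite (delta_span hs (Ur w wU) yz) GRing.mulr0.
    rewrite Cv in yc.
    have [a [a0 [z0 [z0s ->]]]] := ray_decomp rv yc.
    have zz : in_span tau (z0 + z)%R by apply: spanD.
    rewrite -GRing.addrA pairZD pairZZ (pairZ_span hm0 zz) GRing.addr0 pairZ_toR.
    rewrite (eq_big_seq (fun w => (intZ m0 w)%:~R * (if v == w then a else 0))%R); last first.
      by move=> w wU; rewrite (delta_gen hs (Ur w wU) rv a0 zz).
    rewrite (bigD1_seq v) ?Um //= eqxx big1 => [|w wv]; last first.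
      by rewrite eq_sym (negbTE wv) GRing.mulr0.
    by rewrite /= GRing.addr0 GRing.mulrC GRing.subrr.
  have HS : (\sum_(w <- U) intZ m0 w)%R = 0%R.
    by move: cG; rewrite c1 cG1 => /(congr1 (fun t => t - 1)%R); rewrite GRing.subrr GRing.addrC GRing.addKr.
  rewrite toR_sum pairZ_sum.
  under eq_bigr do rewrite pairZ_toR.
  by rewrite -rmorph_sum HS.
rewrite target; exact: span_of_dual hU tS key.
Qed.
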